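(* Let $V$ be a vertex operator algebra, $\rho:P\to V$ a covering of $V$ in $\mathrm{mod}(V)$, and $p\in P$ a homogeneous element with $\rho(p)=\mathbf{1}$. Then $$\mathrm{Ker}(\rho)=\mathrm{span}_{\mathbb{C}}\{v_np\mid v\in V,\ n\ge0\}.$$
   Context: $\mathrm{mod}(V)$: $\mathbb{N}$-graded $V$-modules with composition series of finite length. A surjective $V$-homomorphism $\rho:P\to V$ is a covering if $P$ is the only submodule of $P$ mapping onto $V$. For $v\in V$, $v_n$ denotes the coefficient of $z^{-n-1}$ in the vertex operator $Y^P(v,z)$ on $P$. *)

(* Defs.v *)
From HB Require Import structures.
From mathcomp Require Import all_boot all_order all_algebra.
From mathcomp Require Import reals Rstruct complex.
Set Implicit Arguments. Unset Strict Implicit. Unset Printing Implicit Defensive.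
Import Order.TTheory GRing.Theory Num.Theory.
Local Open Scope ring_scope.

Definition C : numClosedFieldType := (Rdefinitions.R)[i].

Definition intbin (m : int) (i : nat) : C :=
  (\prod_(j < i) ((m - (j : nat)%:Z)%:~R : C)) / (i`!)%:R.

Section VertexAlgebraDefs.
Variable V : lmodType C.

(* Vertex operators are encoded by their modes:  Y u w n = u_n w,
   the coefficient of z^{-n-1} in Y(u,z) w. *)

Section ModuleDefs.
Variable M : lmodType C.

Definition subspace (S : M -> Prop) : Prop :=
  S 0 /\ forall (a : C) (x y : M), S x -> S y -> S (a *: x + y).

Definition in_span (S : M -> Prop) (w : M) : Prop :=
  exists s : seq (C * M), (forall x, x \in s -> S x.2) /\
                          w = \sum_(x <- s) x.1 *: x.2.

Definition is_module (Y : V -> V -> int -> V) (one : V)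
    (YM : V -> M -> int -> M) : Prop :=
  [/\
      (forall (a : C) (u1 u2 : V) (w : M) (n : int),
          YM (a *: u1 + u2) w n = a *: YM u1 w n + YM u2 w n),
      (forall (a : C) (u : V) (w1 w2 : M) (n : int),
          YM u (a *: w1 + w2) n = a *: YM u w1 n + YM u w2 n),
      (forall (u : V) (w : M), exists N : int,
          forall n : int, N <= n -> YM u w n = 0),
      (forall (w : M) (n : int), YM one w n = if n == -1 then w else 0) &
      (* Jacobi identity, in component (Borcherds) form; all sums are finite
         and the bound N is any bound beyond which all terms vanish *)
      (forall (u v : V) (w : M) (m n k : int) (N : nat),
          (forall i : nat, (N <= i)%N ->
             [/\ Y u v (k + i%:Z) = 0, YM v w (n + i%:Z) = 0 &
                 YM u w (m + i%:Z) = 0]) ->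
          \sum_(i < N) intbin m i *: YM (Y u v (k + i%:Z)) w (m + n - i%:Z) =
          \sum_(i < N) ((-1) ^+ i * intbin k i) *:
             (YM u (YM v w (n + i%:Z)) (m + k - i%:Z)
              - (-1) ^ k *: YM v (YM u w (m + i%:Z)) (n + k - i%:Z)))].

(* N-graded module: M = (+)_{k in N} M(k) with v_m M(k) <= M(wt v + k - m - 1)
   for v homogeneous of weight wt v (i.e. L(0) v = (wt v) v), L(0) = omega_1. *)
Definition is_Ngraded (Y : V -> V -> int -> V) (omega : V)
    (YM : V -> M -> int -> M) (gr : nat -> M -> Prop) : Prop :=
  [/\ (forall k, subspace (gr k)),
      (forall w : M, exists s : seq (nat * M),
          (forall x, x \in s -> gr x.1 x.2) /\ w = \sum_(x <- s) x.2),
      (forall (N : nat) (f : 'I_N -> M),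
          (forall i : 'I_N, gr i (f i)) -> \sum_(i < N) f i = 0 ->
          forall i, f i = 0) &
      (forall (v : V) (d : int) (w : M) (k : nat) (m : int),
          Y omega v 1 = d%:~R *: v -> gr k w ->
          if (0 <= d + k%:Z - m - 1)%R then gr (absz (d + k%:Z - m - 1)%R) (YM v w m)
          else YM v w m = 0)].

Definition submodule (YM : V -> M -> int -> M) (S : M -> Prop) : Prop :=
  subspace S /\ forall (v : V) (n : int) (w : M), S w -> S (YM v w n).

Definition finite_length (YM : V -> M -> int -> M) : Prop :=
  exists (k : nat) (S : nat -> M -> Prop),
    [/\ (forall i, submodule YM (S i)),
        (forall w, S 0%N w <-> w = 0),
        (forall w, S k w) &
        (forall i, (i < k)%N ->
           [/\ (forall w, S i w -> S i.+1 w),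
               (exists w, S i.+1 w /\ ~ S i w) &
               (forall T, submodule YM T ->
                  (forall w, S i w -> T w) -> (forall w, T w -> S i.+1 w) ->
                  (forall w, T w <-> S i w) \/ (forall w, T w <-> S i.+1 w))])].

End ModuleDefs.

Definition is_VOA (Y : V -> V -> int -> V) (one omega : V) (c : C) : Prop :=
  let L := fun (n : int) (v : V) => Y omega v (n + 1) in
  [/\ is_module Y one Y,
      (forall u : V, Y u one (-1) = u /\ forall n : int, 0 <= n -> Y u one n = 0),
      (forall (m n : int) (v : V),
          L m (L n v) - L n (L m v) =
          (m - n)%:~R *: L (m + n) v
          + (if m + n == 0 then ((m ^+ 3 - m)%:~R / 12%:R) * c else 0) *: v),
      (* L(-1)-derivative property: Y(L(-1)u, z) = d/dz Y(u, z) *)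
      (forall (u v : V) (n : int), Y (L (-1) u) v n = - n%:~R *: Y u v (n - 1)) &
      [/\ (forall v : V, exists s : seq (int * V),
              (forall x, x \in s -> L 0 x.2 = x.1%:~R *: x.2) /\
              v = \sum_(x <- s) x.2),
          (forall n : int, exists s : seq V,
              forall v, L 0 v = n%:~R *: v -> in_span (fun x => x \in s) v) &
          (exists N : int, forall (n : int) (v : V),
              n < N -> L 0 v = n%:~R *: v -> v = 0)]].

Section Morphisms.
Variables (M1 M2 : lmodType C).

Definition is_hom (YM1 : V -> M1 -> int -> M1) (YM2 : V -> M2 -> int -> M2)
    (f : M1 -> M2) : Prop :=
  (forall (a : C) (x y : M1), f (a *: x + y) = a *: f x + f y) /\
  (forall (v : V) (w : M1) (n : int), f (YM1 v w n) = YM2 v (f w) n).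

Definition is_covering (YM1 : V -> M1 -> int -> M1) (YM2 : V -> M2 -> int -> M2)
    (f : M1 -> M2) : Prop :=
  [/\ is_hom YM1 YM2 f,
      (forall y : M2, exists x : M1, f x = y) &
      (forall S : M1 -> Prop, submodule YM1 S ->
         (forall y : M2, exists x, S x /\ f x = y) -> forall x, S x)].
End Morphisms.

End VertexAlgebraDefs.

(* Main.v *)
Require Import Defs.
From HB Require Import structures.
From mathcomp Require Import all_boot all_order all_algebra.
From mathcomp Require Import reals Rstruct complex.
From mathcomp Require Import zify.
Set Implicit Arguments. Unset Strict Implicit. Unset Printing Implicit Defensive.
Import Order.TTheory GRing.Theory Num.Theory.
Local Open Scope ring_scope.

Section Span.
Variable M : lmodType C.
Implicit Types (G : M -> Prop).

Lemma span0 G : in_span G 0.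
Proof. by exists [::]; split => //; rewrite big_nil. Qed.

Lemma span_gen G y : G y -> in_span G y.
Proof.
move=> Gy; exists [:: (1, y)]; split; first by move=> x; rewrite inE => /eqP ->.
by rewrite big_cons big_nil scale1r addr0.
Qed.

Lemma spanD G x y : in_span G x -> in_span G y -> in_span G (x + y).
Proof.
move=> [s1 [H1 ->]] [s2 [H2 ->]]; exists (s1 ++ s2); split; last by rewrite big_cat.
by move=> z; rewrite mem_cat => /orP [/H1|/H2].
Qed.

Lemma spanZ G a x : in_span G x -> in_span G (a *: x).
Proof.
move=> [s [H ->]]; exists [seq (a * z.1, z.2) | z <- s]; split.
  by move=> z /mapP [z' Hz' ->] /=; apply: H.
rewrite big_map scaler_sumr; apply: eq_bigr => z _ /=; by rewrite scalerA.
Qed.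

Lemma spanB G x y : in_span G x -> in_span G y -> in_span G (x - y).
Proof. move=> Hx Hy; apply: spanD => //; rewrite -scaleN1r; exact: spanZ. Qed.

Lemma spanDr G x y : in_span G (x + y) -> in_span G y -> in_span G x.
Proof. move=> H1 H2; have := spanB H1 H2; by rewrite addrK. Qed.

Lemma span_sum G N (f : 'I_N -> M) :
  (forall i, in_span G (f i)) -> in_span G (\sum_(i < N) f i).
Proof. move=> H; apply: big_ind => //; [exact: span0 | exact: spanD]. Qed.
End Span.

Definition lin (M1 M2 : lmodType C) (f : M1 -> M2) :=
  forall a x y, f (a *: x + y) = a *: f x + f y.

Section Lin.
Variables (M1 M2 : lmodType C) (f : M1 -> M2) (Hf : lin f).
Lemma lin0 : f 0 = 0.
Proof.
have := Hf 1 0 0; rewrite scaler0 addr0 scale1r => h.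
by apply: (addrI (f 0)); rewrite addr0 -h.
Qed.
Lemma linD x y : f (x + y) = f x + f y.
Proof. by have := Hf 1 x y; rewrite !scale1r. Qed.
Lemma linZ a x : f (a *: x) = a *: f x.
Proof. by have := Hf a x 0; rewrite lin0 !addr0. Qed.
Lemma lin_sum (I : Type) (s : seq I) (F : I -> M1) :
  f (\sum_(z <- s) F z) = \sum_(z <- s) f (F z).
Proof.
elim: s => [|z s IH]; first by rewrite !big_nil lin0.
by rewrite !big_cons linD IH.
Qed.
Lemma span_map G G' x : (forall y, G y -> in_span G' (f y)) ->
  in_span G x -> in_span G' (f x).
Proof.
move=> H [s [Hs ->]]; rewrite lin_sum.
elim: s Hs => [|z s IH] Hs; first by rewrite big_nil; exact: span0.
rewrite big_cons; apply: spanD; last first.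
  by apply: IH => w ws; apply: Hs; rewrite inE ws orbT.
rewrite linZ; apply: spanZ; apply: H; apply: Hs; by rewrite inE eqxx.
Qed.
End Lin.

Lemma intbin0 m : intbin m 0 = 1.
Proof. by rewrite /intbin big_ord0 mul1r fact0 invr1. Qed.

Lemma intbin0S i : intbin 0 i.+1 = 0.
Proof. by rewrite /intbin big_ord_recl /= subr0 mul0r mul0r. Qed.

Theorem lemma12
  (V : lmodType C) (Y : V -> V -> int -> V) (one omega : V) (c : C)
  (HV : is_VOA Y one omega c)
  (grV : nat -> V -> Prop)
  (HgrV : is_Ngraded Y omega Y grV) (HlenV : finite_length Y)
  (P : lmodType C) (YP : V -> P -> int -> P) (grP : nat -> P -> Prop)
  (HP : is_module Y one YP) (HgrP : is_Ngraded Y omega YP grP)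
  (HlenP : finite_length YP)
  (rho : P -> V) (Hrho : is_covering YP Y rho)
  (p : P) (Hp_hom : exists k : nat, grP k p) (Hp : rho p = one) :
  forall x : P,
    rho x = 0 <->
    in_span (fun y : P => exists (v : V) (n : int), 0 <= n /\ y = YP v p n) x.
Proof.
case: HV => HYmod Hcreat _ _ _.
case: HYmod => _ _ HYtr _ _.
case: HP => HPl1 HPl2 HPtr HPvac HPjac.
case: Hrho => [[Hrl Hrhom] Hsurj Hcov].
have linP1 : forall w n, lin (fun u => YP u w n) by move=> w n a x y; exact: HPl1.
have linP2 : forall u n, lin (fun w => YP u w n) by move=> u n a x y; exact: HPl2.
have linr : lin rho by [].
have P0 : forall u n, YP u 0 n = 0 by move=> u n; exact: (lin0 (linP2 u n)).
have P00 : YP 0 p (-1) = 0 by exact: (lin0 (linP1 p (-1))).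
have vac1 : forall w, YP one w (-1) = w by move=> w; rewrite HPvac eqxx.
have vac0 : forall w j, j != -1 -> YP one w j = 0 by move=> w j /negPf hj; rewrite HPvac hj.
have cr0 : forall u n, 0 <= n -> Y u one n = 0 by move=> u n hn; case: (Hcreat u) => _ ->.
have cr1 : forall u, Y u one (-1) = u by move=> u; case: (Hcreat u).
have dec : forall v n, n < 0 -> YP (Y v one n) p (-1) = YP v p n.
  move=> v n hn.
  have [K1 HK1] := HYtr v one.
  have [K2 HK2] := HPtr v p.
  set N' := (absz (K1 - n) + absz K2)%N.
  have hyp : forall i : nat, (N'.+1 <= i)%N -> [/\ Y v one (n + i%:Z) = 0,
      YP one p (-1 + i%:Z) = 0 & YP v p (0 + i%:Z) = 0].
    move=> i hi; split; [apply: HK1 | apply: vac0 | apply: HK2]; rewrite /N' in hi; lia.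
  have := HPjac v one p 0 (-1) n N'.+1 hyp.
  rewrite big_ord_recl [X in _ = X]big_ord_recl.
  rewrite big1 => [|i _]; last by rewrite lift0 intbin0S scale0r.
  rewrite big1 => [|i _]; last first.
    rewrite lift0 (vac0 p) ?P0 ?(vac0 (YP v p _)) ?scaler0 ?subr0 ?scaler0 //; lia.
  rewrite !addr0 /= intbin0 expr0 mul1r !scale1r.
  rewrite intbin0 scale1r !add0r vac1 (vac0 (YP v p 0)) ?scaler0 ?subr0 //; lia.
pose A := in_span (fun y : P => exists v n, y = YP v p n).
have claim : forall u0 m0 v n0, A (YP u0 (YP v p n0) m0).
  move=> u0 m0 v n0.
  have [Nv HNv] := HPtr v p.
  suff: forall d : nat, forall n : int, Nv - n <= d%:Z -> forall u m, A (YP u (YP v p n) m).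
    by move=> /(_ (absz (Nv - n0)) n0) H; apply: H; lia.
  elim=> [|d IH] n hd u m.
    by rewrite HNv ?P0; [exact: span0 | lia].
  have [hn|hn] := leP Nv n.
    by rewrite HNv // P0; exact: span0.
  have [Mu HMu] := HPtr u p.
  have [K HK] := HYtr u v.
  set k := m - Mu.
  set N' := (absz (K - k)%R + absz (Nv - n - 1)%R)%N.
  have hyp : forall i : nat, (N'.+1 <= i)%N -> [/\ Y u v (k + i%:Z) = 0,
      YP v p (n + i%:Z) = 0 & YP u p (Mu + i%:Z) = 0].
    move=> i hi; split; [apply: HK | apply: HNv | apply: HMu]; rewrite /N' /k in hi *; lia.
  have := HPjac u v p Mu n k N'.+1 hyp.
  rewrite [X in _ = X]big_ord_recl => E.
  have AL : A (\sum_(i < N'.+1) intbin Mu i *: YP (Y u v (k + i%:Z)) p (Mu + n - i%:Z)).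
    apply: span_sum => i; apply: spanZ; apply: span_gen.
    by exists (Y u v (k + i%:Z)), (Mu + n - i%:Z).
  rewrite E in AL.
  move/spanDr: AL => AL.
  have AR0 := AL ltac:(apply: span_sum => i; apply: spanZ; rewrite lift0;
    rewrite HMu ?P0 ?scaler0 ?subr0; [apply: IH; lia | lia]).
  move: AR0; rewrite /= expr0 intbin0 mul1r scale1r.
  rewrite (_ : Posz 0 = 0) // !addr0 ?subr0 HMu // P0 scaler0 subr0.
  have -> : Mu + k = m by rewrite /k addrCA subrr addr0.
  done.
have Aall : forall x, A x.
  apply: Hcov.
    split.
      split; first exact: span0.
      by move=> a x y Ax Ay; apply: spanD => //; exact: spanZ.
    move=> v n w Aw; apply: (span_map (linP2 v n) _ Aw) => y [v' [n' ->]].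
    exact: claim.
  move=> y; exists (YP y p (-1)); split; first by apply: span_gen; exists y, (-1).
  by rewrite Hrhom Hp cr1.
have kerW : forall x, in_span (fun y : P => exists (v : V) (n : int), 0 <= n /\ y = YP v p n) x -> rho x = 0.
  move=> x [s [Hs ->]]; rewrite (lin_sum linr); apply: big1_seq => z /andP[_ zs].
  rewrite (linZ linr); case: (Hs z zs) => v [n [hn ->]]; by rewrite Hrhom Hp cr0 // scaler0.
move=> x; split; last exact: kerW.
move=> hx.
pose g := fun y => y - YP (rho y) p (-1).
have lg : lin g.
  by move=> a y1 y2; rewrite /g Hrl HPl1 scalerBr opprD addrACA.
have gW := span_map lg _ (Aall x).
move: gW; rewrite /g hx P00 subr0; apply => y [v [n ->]].
have [hn|hn] := leP 0 n.
  rewrite Hrhom Hp cr0 // P00 subr0.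
  by apply: span_gen; exists v, n.
by rewrite Hrhom Hp dec // subrr; exact: span0.
Qed.
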